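(* For $a,b>0$ let $\mathrm{Herm}(a,b)$ denote the distribution of $U+2V$, where $U\sim\mathrm{Poisson}(a)$ and $V\sim\mathrm{Poisson}(b)$ are independent. If $0<a\le c$ and $0<b\le d$, then $\mathrm{Herm}(a,b)\le_{wd}\mathrm{Herm}(c,d)$.
   Context: For a real random variable $X$, its Lévy concentration function is $Q_X(\varepsilon)=\sup_{x_0\in\mathbb{R}}\Pr\{X\in[x_0,x_0+\varepsilon]\}$, $\varepsilon>0$. For random variables (or distributions) $X,Y$, write $X\le_{wd}Y$ if $Q_X(\varepsilon)\ge Q_Y(\varepsilon)$ for all $\varepsilon>0$. *)

(* Defs.v *)
From HB Require Import structures.
From mathcomp Require Import all_boot all_order all_algebra.
From mathcomp Require Import all_classical all_reals.
From mathcomp Require Import all_analysis.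
Set Implicit Arguments. Unset Strict Implicit. Unset Printing Implicit Defensive.
Import Order.TTheory GRing.Theory Num.Theory.
Local Open Scope classical_set_scope.
Local Open Scope ring_scope.

Section Defs.
Variable R : realType.

Definition poisson_pmf (a : R) (k : nat) : R :=
  expR (- a) * a ^+ k / (k`!)%:R.

(* Herm(a,b): law of U + 2V with U ~ Poisson(a), V ~ Poisson(b) independent;
   its mass at k is the convolution sum over V = j, U = k - 2j. *)
Definition herm_pmf (a b : R) (k : nat) : R :=
  \sum_(j < k./2.+1) poisson_pmf a (k - 2 * j) * poisson_pmf b j.

(* Pr{X in [x0, x0+e]} for an N-valued X with pmf p. All k <= x0+e with k >= 0
   satisfy k < |floor(x0+e)| + 1, so the finite sum covers every relevant k. *)
Definition interval_prob (p : nat -> R) (x0 e : R) : R :=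
  \sum_(k < (`|Num.floor (x0 + e)|%N).+1)
     (if (x0 <= k%:R) && (k%:R <= x0 + e) then p k else 0).

Definition levy_conc (p : nat -> R) (e : R) : R :=
  sup [set interval_prob p x0 e | x0 in [set: R]].

Definition le_wd (p q : nat -> R) : Prop :=
  forall e : R, 0 < e -> levy_conc q e <= levy_conc p e.

End Defs.

(* Main.v *)
Require Import Defs.
From HB Require Import structures.
From mathcomp Require Import all_boot all_order all_algebra.
From mathcomp Require Import ring lra zify.
From mathcomp Require Import all_classical all_reals all_analysis.
Import Order.TTheory GRing.Theory Num.Theory.
Local Open Scope ring_scope.
Notation P := Defs.poisson_pmf.
Section P.
Variable R : realType.
Implicit Types a b : R.

Lemma poisson_ge0 a k : 0 <= a -> 0 <= P a k.
Proof.
move=> a0; rewrite /Defs.poisson_pmf; apply: divr_ge0; [apply: mulr_ge0; [exact: expR_ge0|exact: exprn_ge0]|exact: ler0n].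
Qed.

Lemma poisson_sum_le1 a N : 0 <= a -> \sum_(k < N) P a k <= 1.
Proof.
move=> a0.
have -> : \sum_(k < N) P a k = expR (- a) * series (exp_coeff a) N.
  rewrite /series /= big_mkord mulr_sumr; apply: eq_bigr => i _.
  by rewrite /Defs.poisson_pmf /exp_coeff /= mulrA.
rewrite -(expRxMexpNx_1 a) mulrC ler_wpM2r ?expR_ge0 //.
apply: nondecreasing_cvgn_le; last exact: is_cvg_series_exp_coeff.
apply/nondecreasing_seqP => n; rewrite /series /= big_nat_recr //= lerDl.
exact: exp_coeff_ge0.
Qed.
End P.
Section C.
Variable R : realType.

Lemma sum_pick N m (G : nat -> R) :
  \sum_(w < N) ((w == m :> nat)%N%:R * G w) = (m < N)%N%:R * G m.
Proof.
case: (ltnP m N) => hm.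
  rewrite (bigD1 (Ordinal hm)) //= eqxx mul1r big1 ?addr0 ?mul1r //.
  move=> i /eqP hi; case: eqP => [him|]; last by rewrite mul0r.
  by exfalso; apply: hi; apply: val_inj.
rewrite mul0r big1 // => i _; case: eqP => [him|]; last by rewrite mul0r.
by move: (ltn_ord i); rewrite him ltnNge hm.
Qed.

Lemma cv_reduce s n N (F : nat -> nat -> R) : (n < N)%N ->
  \sum_(u < N) \sum_(v < N) ((u + s * v == n)%N%:R * F u v) =
  \sum_(v < N) ((s * v <= n)%N%:R * F (n - s * v)%N v).
Proof.
move=> hn; rewrite exchange_big; apply: eq_bigr => v _ /=.
have E : forall u : nat, (u + s * v == n)%N = ((s * v <= n) && (u == n - s * v))%N.
  move=> u; apply/eqP/andP => [<-|[h /eqP ->]]; last by rewrite subnK.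
  by rewrite leq_addl addnK.
under eq_bigr do rewrite E -mulnb natrM -mulrA.
rewrite -mulr_sumr (sum_pick N (n - s * v)%N (fun w => F w v)).
have -> : (n - s * v < N)%N by apply: leq_ltn_trans hn; apply: leq_subr.
by rewrite mul1r.
Qed.

Lemma range_reduce s n N (G : nat -> R) : (0 < s)%N -> (n < N)%N ->
  \sum_(v < N) ((s * v <= n)%N%:R * G v) = \sum_(v < (n %/ s).+1) G v.
Proof.
move=> s0 hn.
have hle : ((n %/ s).+1 <= N)%N.
  by apply: leq_ltn_trans hn; apply: leq_div.
rewrite (big_ord_widen _ G hle) [RHS]big_mkcond /=; apply: eq_bigr => v _.
rewrite ltnS leq_divRL // mulnC; by case: (v * s <= n)%N; rewrite /= ?mul1r ?mul0r.
Qed.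

End C.

Section D.
Variable R : realType.

Lemma poisson_conv (a a' : R) n :
  \sum_(v < n.+1) P a (n - v)%N * P a' v = P (a + a') n.
Proof.
rewrite /Defs.poisson_pmf exprDn opprD expRD mulr_sumr mulr_suml.
apply: eq_bigr => i _.
have hi : (i <= n)%N by rewrite -ltnS.
have hf : n`!%:R = 'C(n, i)%:R * (i`!%:R * (n - i)`!%:R) :> R.
  by rewrite -!natrM bin_fact.
rewrite hf -mulr_natr.
have f1 : (i`!%:R : R) != 0 by rewrite pnatr_eq0 -lt0n fact_gt0.
have f2 : ((n - i)`!%:R : R) != 0 by rewrite pnatr_eq0 -lt0n fact_gt0.
have f3 : ('C(n, i)%:R : R) != 0 by rewrite pnatr_eq0 -lt0n bin_gt0.
field.
by rewrite f1 f2 f3.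
Qed.
End D.

Section E.
Variable R : realType.

Lemma herm_box (a b : R) n N : (n < N)%N ->
  herm_pmf a b n = \sum_(u < N) \sum_(v < N) ((u + 2 * v == n)%N%:R * (P a u * P b v)).
Proof.
move=> hn; rewrite (@cv_reduce R 2 _ _ (fun u v => P a u * P b v) hn).
rewrite (@range_reduce R _ _ N (fun v => P a (n - 2 * v)%N * P b v)) //.
by rewrite /herm_pmf divn2.
Qed.

Lemma poisson_box (a a' : R) n N : (n < N)%N ->
  P (a + a') n = \sum_(u < N) \sum_(v < N) ((u + 1 * v == n)%N%:R * (P a u * P a' v)).
Proof.
move=> hn; rewrite (@cv_reduce R 1 _ _ (fun u v => P a u * P a' v) hn).
rewrite (@range_reduce R _ _ N (fun v => P a (n - 1 * v)%N * P a' v)) // divn1.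
by rewrite -poisson_conv; apply: eq_bigr => v _; rewrite mul1n.
Qed.

Lemma mul_sum2l N (x : R) (F : 'I_N -> 'I_N -> R) :
  x * (\sum_(u < N) \sum_(v < N) F u v) = \sum_(u < N) \sum_(v < N) (x * F u v).
Proof. rewrite mulr_sumr; apply: eq_bigr => u _; by rewrite mulr_sumr. Qed.

Lemma mul_sum2r N (x : R) (F : 'I_N -> 'I_N -> R) :
  (\sum_(u < N) \sum_(v < N) F u v) * x = \sum_(u < N) \sum_(v < N) (F u v * x).
Proof. rewrite mulr_suml; apply: eq_bigr => u _; by rewrite mulr_suml. Qed.

Lemma move_in4 N (F : 'I_N -> 'I_N -> 'I_N -> 'I_N -> 'I_N -> R) :
  \sum_(x < N) \sum_(a < N) \sum_(b < N) \sum_(c < N) \sum_(d < N) F x a b c d =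
  \sum_(a < N) \sum_(b < N) \sum_(c < N) \sum_(d < N) \sum_(x < N) F x a b c d.
Proof.
rewrite exchange_big; apply: eq_bigr => a _.
rewrite exchange_big; apply: eq_bigr => b _.
rewrite exchange_big; apply: eq_bigr => c _.
by rewrite exchange_big.
Qed.


Lemma prod4 N (c : R) (X Y : 'I_N -> 'I_N -> R) :
  c * ((\sum_(i < N) \sum_(j < N) X i j) * (\sum_(l < N) \sum_(m < N) Y l m)) =
  \sum_(i < N) \sum_(j < N) \sum_(l < N) \sum_(m < N) (c * (X i j * Y l m)).
Proof.
rewrite mul_sum2r mulr_sumr; apply: eq_bigr => i _; rewrite mulr_sumr; apply: eq_bigr => j _.
rewrite mulrA mulr_sumr; apply: eq_bigr => l _; rewrite mulr_sumr; apply: eq_bigr => m _.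
by rewrite mulrA.
Qed.

Lemma inner_eval N k (u' u v' v : nat) (A B : R) : (k < N)%N ->
  \sum_(w < N) \sum_(z < N) ((w + 2 * z == k)%N%:R *
      (((u' + 1 * u == w)%N%:R * A) * ((v' + 1 * v == z)%N%:R * B))) =
  (u' + u + 2 * (v' + v) == k)%N%:R * (A * B).
Proof.
move=> hk.
transitivity (\sum_(w < N) ((w == u' + u :> nat)%N%:R * \sum_(z < N)
   ((z == v' + v :> nat)%N%:R * ((w + 2 * z == k)%N%:R * (A * B))))).
  apply: eq_bigr => w _; rewrite mulr_sumr; apply: eq_bigr => z _.
  have e1 : (u' + 1 * u == w)%N = (w == u' + u :> nat)%N by rewrite mul1n eq_sym.
  have e2 : (v' + 1 * v == z)%N = (z == v' + v :> nat)%N by rewrite mul1n eq_sym.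
  rewrite e1 e2; ring.
under eq_bigr => w _ do rewrite (@sum_pick R N (v' + v) (fun z => (w + 2 * z == k)%N%:R * (A * B))).
rewrite (@sum_pick R N (u' + u) (fun w => (v' + v < N)%N%:R * ((w + 2 * (v' + v) == k)%N%:R * (A * B)))).
case: eqP => [he|_]; last by rewrite /= mulr0n !mul0r !mulr0.
have h1 : (u' + u < N)%N by apply: leq_ltn_trans hk; rewrite -he leq_addr.
have h2 : (v' + v < N)%N.
  apply: leq_ltn_trans hk; rewrite -he; apply: leq_trans (leq_addl _ _).
  by rewrite leq_pmull.
by rewrite h1 h2 /= mulr1n !mul1r.
Qed.


Lemma decomp (a a' b b' : R) k N : (k < N)%N ->
  herm_pmf (a + a') (b + b') k =
  \sum_(u' < N) \sum_(v' < N) (P a' u' * P b' v' *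
      ((u' + 2 * v' <= k)%N%:R * herm_pmf a b (k - (u' + 2 * v'))%N)).
Proof.
move=> hk.
transitivity (\sum_(u' < N) \sum_(u < N) \sum_(v' < N) \sum_(v < N)
   ((u' + u + 2 * (v' + v) == k)%N%:R * ((P a' u' * P a u) * (P b' v' * P b v)))).
  rewrite [a + a']addrC [b + b']addrC (herm_box _ _ _ _ hk).
  transitivity (\sum_(w < N) \sum_(z < N) \sum_(u' < N) \sum_(u < N) \sum_(v' < N) \sum_(v < N)
     ((w + 2 * z == k)%N%:R * (((u' + 1 * u == w)%N%:R * (P a' u' * P a u)) *
        ((v' + 1 * v == z)%N%:R * (P b' v' * P b v))))).
    apply: eq_bigr => w _; apply: eq_bigr => z _.
    by rewrite (poisson_box a' a _ _ (ltn_ord w)) (poisson_box b' b _ _ (ltn_ord z)) prod4.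
  under eq_bigr => w _ do rewrite move_in4.
  rewrite move_in4.
  apply: eq_bigr => u' _; apply: eq_bigr => u _; apply: eq_bigr => v' _; apply: eq_bigr => v _.
  exact: inner_eval.
apply: eq_bigr => u' _; rewrite exchange_big; apply: eq_bigr => v' _.
case: (leqP (u' + 2 * v') k) => hs; last first.
  rewrite /= mulr0n mul0r mulr0 big1 // => u _; rewrite big1 // => v _.
  case: eqP => [he|]; last by rewrite mulr0n mul0r.
  by exfalso; move: hs; rewrite -he ltnNge; apply/negP/negPn; lia.
have hks : (k - (u' + 2 * v') < N)%N by apply: leq_ltn_trans hk; apply: leq_subr.
rewrite (herm_box _ _ _ _ hks) /= mulr1n mul1r mul_sum2l.
apply: eq_bigr => u _; apply: eq_bigr => v _.
have -> : (u' + u + 2 * (v' + v) == k)%N = (u + 2 * v == k - (u' + 2 * v'))%N.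
  apply/eqP/eqP; lia.
ring.
Qed.

End E.

Section F.
Variable R : realType.

Definition ipN (p : nat -> R) (x0 e : R) N :=
  \sum_(k < N) (if (x0 <= k%:R) && (k%:R <= x0 + e) then p k else 0).

Lemma kK (x : R) (k : nat) : k%:R <= x -> (k < `|Num.floor x|.+1)%N.
Proof.
move=> h.
have hz : (k%:Z <= Num.floor x)%R by rewrite floor_ge_int.
rewrite ltnS; lia.
Qed.

Lemma sum_widen_le (f : nat -> R) N1 N2 : (forall k, 0 <= f k) -> (N1 <= N2)%N ->
  \sum_(k < N1) f k <= \sum_(k < N2) f k.
Proof.
move=> f0 hN; rewrite (big_ord_widen _ f hN) [leRHS]big_mkcond /=.
rewrite [leLHS]big_mkcond /=; apply: ler_sum => i _.
by case: (i < N1)%N; rewrite ?lexx.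
Qed.

Lemma sum_vanish (f : nat -> R) K M : (K <= M)%N -> (forall k, (K <= k)%N -> f k = 0) ->
  \sum_(k < M) f k = \sum_(k < K) f k.
Proof.
move=> hM hf; rewrite (big_ord_widen _ f hM) [RHS]big_mkcond /=; apply: eq_bigr => i _.
by case: ltnP => // hi; rewrite hf.
Qed.

Lemma ipN_le (p : nat -> R) x0 e N : (forall k, 0 <= p k) ->
  ipN p x0 e N <= interval_prob p x0 e.
Proof.
move=> p0; rewrite /interval_prob.
set K := (`|Num.floor (x0 + e)|.+1)%N.
set f := fun k : nat => (if (x0 <= k%:R) && (k%:R <= x0 + e) then p k else 0).
have f0 : forall k, 0 <= f k by move=> k; rewrite /f; case: ifP.
rewrite /ipN -/f.
apply: (@le_trans _ _ (\sum_(k < maxn N K) f k)).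
  by apply: sum_widen_le => //; rewrite leq_maxl.
rewrite (@sum_vanish f K) ?leq_maxr // => k hk.
rewrite /f; case: ifP => // /andP[_ h]; by move: (kK _ _ h); rewrite -/K ltnNge hk.
Qed.


Lemma shift_bound (H : nat -> R) M x0 e K s : (forall k, 0 <= H k) -> 0 <= M ->
  (forall x, interval_prob H x e <= M) ->
  \sum_(k < K) (if (x0 <= k%:R) && (k%:R <= x0 + e) then (s <= k)%N%:R * H (k - s)%N else 0) <= M.
Proof.
move=> H0 M0 hM.
case: (leqP s K) => hsK; last first.
  rewrite big1 // => k _; case: ifP => // _.
  by rewrite leqNgt (ltn_trans (ltn_ord k) hsK) /= mulr0n mul0r.
apply: le_trans (hM (x0 - s%:R)).
apply: le_trans (ipN_le _ _ _ (K - s) H0).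
rewrite /ipN.
pose g := fun k : nat => if (x0 <= k%:R) && (k%:R <= x0 + e) then (s <= k)%N%:R * H (k - s)%N else 0.
pose g' := fun k : nat => if (x0 - s%:R <= k%:R) && (k%:R <= x0 - s%:R + e) then H k else 0.
change (\sum_(k < K) g k <= \sum_(k < K - s) g' k).
rewrite -(big_mkord xpredT g) -(big_mkord xpredT g') (big_cat_nat (leq0n s) hsK) /=.
rewrite big_nat_cond big1 ?add0r => [|k /andP[/andP[_ hk] _]]; last first.
  by rewrite /g; case: ifP => // _; rewrite leqNgt hk /= mulr0n mul0r.
rewrite -{1}(add0n s) big_addn; apply: ler_sum => i _.
rewrite /g /g' leq_addl /= mulr1n mul1r addnK natrD.
have -> : (x0 <= i%:R + s%:R) = (x0 - s%:R <= i%:R) by apply/idP/idP => ?; lra.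
have -> : (i%:R + s%:R <= x0 + e) = (i%:R <= x0 - s%:R + e) by apply/idP/idP => ?; lra.
by [].
Qed.


Lemma herm_ge0 (a b : R) k : 0 <= a -> 0 <= b -> 0 <= herm_pmf a b k.
Proof.
move=> a0 b0; rewrite /herm_pmf; apply: sumr_ge0 => j _.
by apply: mulr_ge0; apply: poisson_ge0.
Qed.

Lemma herm_sum_le1 (a b : R) K : 0 <= a -> 0 <= b -> \sum_(k < K) herm_pmf a b k <= 1.
Proof.
move=> a0 b0.
rewrite (eq_bigr (fun k : 'I_K => \sum_(u < K) \sum_(v < K)
   ((u + 2 * v == k)%N%:R * (P a u * P b v)))); last first.
  by move=> k _; apply: herm_box.
rewrite exchange_big /=.
apply: (@le_trans _ _ (\sum_(u < K) \sum_(v < K) (P a u * P b v))).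
  apply: ler_sum => u _; rewrite exchange_big /=; apply: ler_sum => v _.
  rewrite (eq_bigr (fun k : 'I_K => ((k == u + 2 * v :> nat)%N%:R * (P a u * P b v)))); last first.
    by move=> k _; rewrite eq_sym.
  rewrite (@sum_pick R K (u + 2 * v) (fun _ => P a u * P b v)).
  case: (u + 2 * v < K)%N; rewrite /= ?mulr1n ?mul1r // mulr0n mul0r.
  by apply: mulr_ge0; apply: poisson_ge0.
apply: (@le_trans _ _ (\sum_(u < K) P a u * 1)).
  apply: ler_sum => u _; rewrite -mulr_sumr; apply: ler_wpM2l; first exact: poisson_ge0.
  exact: poisson_sum_le1.
under eq_bigr do rewrite mulr1.
exact: poisson_sum_le1.
Qed.

Lemma ip_ge0 (p : nat -> R) x e : (forall k, 0 <= p k) -> 0 <= interval_prob p x e.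
Proof.
move=> p0; rewrite /interval_prob; apply: sumr_ge0 => k _; by case: ifP.
Qed.

Lemma ip_le1 (a b : R) x e : 0 <= a -> 0 <= b -> interval_prob (herm_pmf a b) x e <= 1.
Proof.
move=> a0 b0; rewrite /interval_prob.
apply: le_trans (herm_sum_le1 _ _ _ a0 b0); apply: ler_sum => k _.
by case: ifP => // _; apply: herm_ge0.
Qed.


Lemma mono_bound (a a' b b' : R) e M x0 : 0 <= a -> 0 <= a' -> 0 <= b -> 0 <= b' ->
  0 <= M -> (forall x, interval_prob (herm_pmf a b) x e <= M) ->
  interval_prob (herm_pmf (a + a') (b + b')) x0 e <= M.
Proof.
move=> a0 a'0 b0 b'0 M0 hM; rewrite /interval_prob.
set K := (`|Num.floor (x0 + e)|.+1)%N.
rewrite (eq_bigr (fun k : 'I_K => \sum_(u' < K) \sum_(v' < K) (P a' u' * P b' v' *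
   (if (x0 <= k%:R) && (k%:R <= x0 + e) then
     (u' + 2 * v' <= k)%N%:R * herm_pmf a b (k - (u' + 2 * v'))%N else 0)))); last first.
  move=> k _; case: ifP => _; first exact: decomp.
  by rewrite big1 // => u' _; rewrite big1 // => v' _; rewrite mulr0.
rewrite exchange_big /=.
apply: (@le_trans _ _ (\sum_(u' < K) \sum_(v' < K) (P a' u' * P b' v' * M))).
  apply: ler_sum => u' _; rewrite exchange_big /=; apply: ler_sum => v' _.
  rewrite -mulr_sumr; apply: ler_wpM2l.
    by apply: mulr_ge0; apply: poisson_ge0.
  apply: shift_bound => // k; exact: herm_ge0.
apply: (@le_trans _ _ (\sum_(u' < K) (P a' u' * M))).
  apply: ler_sum => u' _.
  under eq_bigr do rewrite mulrAC -mulrA.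
  rewrite -mulr_sumr; apply: ler_wpM2l; first exact: poisson_ge0.
  rewrite -mulr_sumr -[leRHS]mulr1; apply: ler_wpM2l => //.
  exact: poisson_sum_le1.
rewrite -mulr_suml -[leRHS]mul1r; apply: ler_wpM2r => //.
exact: poisson_sum_le1.
Qed.

End F.

Theorem mainTheorem11 (R : realType) (a b c d : R) :
  0 < a -> a <= c -> 0 < b -> b <= d ->
  le_wd (herm_pmf a b) (herm_pmf c d).
Proof.
move=> a0 ac b0 bd e e0.
have hc : c = a + (c - a) by rewrite addrC subrK.
have hd : d = b + (d - b) by rewrite addrC subrK.
have a0' : 0 <= a by exact: ltW.
have b0' : 0 <= b by exact: ltW.
have ca : 0 <= c - a by rewrite subr_ge0.
have db : 0 <= d - b by rewrite subr_ge0.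
set S := [set interval_prob (herm_pmf a b) x0 e | x0 in [set: R]]%classic.
have hS : has_sup S.
  split; first by exists (interval_prob (herm_pmf a b) 0 e); exists 0.
  exists 1 => y [x _ <-]; exact: ip_le1.
have hM : forall x, interval_prob (herm_pmf a b) x e <= levy_conc (herm_pmf a b) e.
  move=> x; apply: sup_upper_bound => //; by exists x.
have M0 : 0 <= levy_conc (herm_pmf a b) e.
  apply: le_trans (hM 0); apply: ip_ge0 => k; exact: herm_ge0.
rewrite /levy_conc; apply: ge_sup.
  by exists (interval_prob (herm_pmf c d) 0 e); exists 0.
move=> y [x _ <-]; rewrite hc hd; apply: mono_bound => //.
Qed.
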